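(* Let $(V,L,\varphi,E)$ be a valuation system. Then $\varphi$ is $\Pi$-extendible if and only if there exist a sublattice $C$ of $V$ and a valuation $\psi:C\to E$ such that $(V,C,\psi,E)$ is $\Pi$-complete and $\psi$ extends $\varphi$.
   Context: A valuation system $(V,L,\varphi,E)$ consists of: (i) a lattice $V$ which is $\sigma$-distributive, i.e. for every $a\in V$ and every sequence $(b_n)$ in $V$ whose infimum exists, $\bigwedge_n(a\vee b_n)$ exists and equals $a\vee\bigwedge_n b_n$, and dually for suprema; (ii) a sublattice $L$ of $V$; (iii) a partially ordered abelian group $E$ which is R-complete: whenever $x_1\ge x_2\ge\cdots$ and $y_1\ge y_2\ge\cdots$ in $E$ are such that $\bigwedge_n(x_n+y_n)$ exists, then $\bigwedge_n x_n$ and $\bigwedge_n y_n$ exist, and dually for increasing sequences and suprema; (iv) a valuation $\varphi:L\to E$, i.e. an order-preserving map with $\varphi(a\wedge b)+\varphi(a\vee b)=\varphi(a)+\varphi(b)$. A map $\psi:C\to E$ extends $\varphi:L\to E$ if $L\subseteq C$ and $\psi|_L=\varphi$. A decreasing sequence $a_1\ge a_2\ge\cdots$ in $L$ is $\varphi$-convergent if $\bigwedge_n a_n$ exists in $V$ and $\bigwedge_n\varphi(a_n)$ exists in $E$. The system is $\Pi$-complete if for every $\varphi$-convergent decreasing sequence $(a_n)$ in $L$ we have $\bigwedge_n a_n\in L$ and $\varphi(\bigwedge_n a_n)=\bigwedge_n\varphi(a_n)$. Let $\Pi L:=\{\bigwedge_n a_n: (a_n)\text{ a }\varphi\text{-convergent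 decreasing sequence in }L\}$ (a sublattice of $V$). $\varphi$ is $\Pi$-extendible if there is a valuation $\Pi\varphi:\Pi L\to E$ with $\Pi\varphi(\bigwedge_n a_n)=\bigwedge_n\varphi(a_n)$ for every $\varphi$-convergent decreasing sequence $(a_n)$ in $L$. *)

(* Defs.v *)
From HB Require Import structures.
From mathcomp Require Import all_boot all_order all_algebra.
Set Implicit Arguments. Unset Strict Implicit. Unset Printing Implicit Defensive.
Import Order.TTheory GRing.Theory Num.Theory.
Local Open Scope order_scope.

Definition is_inf {d} {T : porderType d} (b : nat -> T) (x : T) : Prop :=
  (forall n, x <= b n) /\ (forall y, (forall n, y <= b n) -> y <= x).
Definition is_sup {d} {T : porderType d} (b : nat -> T) (x : T) : Prop :=
  (forall n, b n <= x) /\ (forall y, (forall n, b n <= y) -> x <= y).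

Definition decreasing {d} {T : porderType d} (a : nat -> T) : Prop :=
  forall n, a n.+1 <= a n.
Definition increasing {d} {T : porderType d} (a : nat -> T) : Prop :=
  forall n, a n <= a n.+1.

Definition sigma_distributive {d} (V : latticeType d) : Prop :=
  (forall (a : V) (b : nat -> V) (x : V), is_inf b x ->
      is_inf (fun n => a `|` b n) (a `|` x)) /\
  (forall (a : V) (b : nat -> V) (x : V), is_sup b x ->
      is_sup (fun n => a `&` b n) (a `&` x)).

Definition sublattice {d} {V : latticeType d} (L : V -> Prop) : Prop :=
  forall a b, L a -> L b -> L (a `&` b) /\ L (a `|` b).

Definition po_group (E : porderZmodType) : Prop :=
  forall x y z : E, (x <= y)%R -> (x + z <= y + z)%R.

Definition R_complete (E : porderZmodType) : Prop :=
  (forall x y : nat -> E, decreasing x -> decreasing y ->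
     (exists s, is_inf (fun n => x n + y n)%R s) ->
     (exists s, is_inf x s) /\ (exists t, is_inf y t)) /\
  (forall x y : nat -> E, increasing x -> increasing y ->
     (exists s, is_sup (fun n => x n + y n)%R s) ->
     (exists s, is_sup x s) /\ (exists t, is_sup y t)).

(* (iv) valuation on the subset L (a map L -> E is represented by a total
   function whose values outside L are irrelevant) *)
Definition valuation {d} {V : latticeType d} {E : porderZmodType}
  (L : V -> Prop) (phi : V -> E) : Prop :=
  (forall a b, L a -> L b -> a <= b -> (phi a <= phi b)%R) /\
  (forall a b, L a -> L b -> (phi (a `&` b) + phi (a `|` b) = phi a + phi b)%R).

Definition valuation_system {d} (V : latticeType d) (L : V -> Prop)
  (E : porderZmodType) (phi : V -> E) : Prop :=
  sigma_distributive V /\ sublattice L /\ po_group E /\ R_complete E /\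
  valuation L phi.

Definition extends {d} {V : latticeType d} {E : porderZmodType}
  (L : V -> Prop) (phi : V -> E) (C : V -> Prop) (psi : V -> E) : Prop :=
  (forall a, L a -> C a) /\ (forall a, L a -> psi a = phi a).

Definition phi_convergent {d} {V : latticeType d} {E : porderZmodType}
  (L : V -> Prop) (phi : V -> E) (a : nat -> V) : Prop :=
  (forall n, L (a n)) /\ decreasing a /\
  (exists x, is_inf a x) /\ (exists s, is_inf (fun n => phi (a n)) s).

Definition Pi_complete {d} {V : latticeType d} {E : porderZmodType}
  (L : V -> Prop) (phi : V -> E) : Prop :=
  forall a : nat -> V, phi_convergent L phi a ->
  forall x, is_inf a x -> L x /\ is_inf (fun n => phi (a n)) (phi x).

Definition PiL {d} {V : latticeType d} {E : porderZmodType}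
  (L : V -> Prop) (phi : V -> E) : V -> Prop :=
  fun x => exists a : nat -> V, phi_convergent L phi a /\ is_inf a x.

Definition Pi_extendible {d} {V : latticeType d} {E : porderZmodType}
  (L : V -> Prop) (phi : V -> E) : Prop :=
  exists Piphi : V -> E, valuation (PiL L phi) Piphi /\
    forall a : nat -> V, phi_convergent L phi a ->
    forall x, is_inf a x -> is_inf (fun n => phi (a n)) (Piphi x).

(* Main.v *)
Require Import Defs.
From mathcomp Require Import all_boot all_order all_algebra.
From Stdlib Require Import IndefiniteDescription.
Set Implicit Arguments. Unset Strict Implicit. Unset Printing Implicit Defensive.
Import Order.TTheory GRing.Theory.
Local Open Scope order_scope.

Section Aux.

Lemma inf_unique d (T : porderType d) (b : nat -> T) x y :
  is_inf b x -> is_inf b y -> x = y.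
Proof.
move=> [Hx1 Hx2] [Hy1 Hy2]; apply/le_anti; rewrite (Hx2 _ Hy1) (Hy2 _ Hx1) //.
Qed.

Lemma inf_const d (T : porderType d) (a : T) : is_inf (fun _ => a) a.
Proof. by split=> [n|y Hy] //; exact: (Hy 0%N). Qed.

Lemma inf_ext d (T : porderType d) (f g : nat -> T) s :
  (forall n, f n = g n) -> is_inf f s -> is_inf g s.
Proof.
move=> e [H1 H2]; split=> [n|y Hy]; first by rewrite -e.
by apply: H2 => n; rewrite e.
Qed.

Lemma dec_le d (T : porderType d) (a : nat -> T) :
  decreasing a -> forall m n, (m <= n)%N -> a n <= a m.
Proof.
move=> Ha m n mn; rewrite -(subnKC mn).
elim: (n - m)%N => [|k IH]; first by rewrite addn0.
by rewrite addnS; apply: le_trans (Ha _) IH.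
Qed.

Lemma leD (E : porderZmodType) : po_group E ->
  forall x y z : E, (x <= y)%R -> (x + z <= y + z)%R.
Proof. by []. Qed.

Lemma inf_add (E : porderZmodType) : po_group E ->
  forall (x y : nat -> E) s t, decreasing x -> decreasing y ->
  is_inf x s -> is_inf y t -> is_inf (fun n => x n + y n)%R (s + t)%R.
Proof.
move=> HE x y s t Dx Dy [Hs1 Hs2] [Ht1 Ht2]; split.
  move=> n; apply: (@le_trans _ _ (x n + t)%R).
    exact: HE.
  by rewrite (addrC (x n)) (addrC (x n)); apply: HE.
move=> z Hz.
have H1 : forall m, (z - x m <= t)%R.
  move=> m; apply: Ht2 => n.
  have H : (z <= x m + y n)%R.
    apply: (le_trans (Hz (maxn m n))).
    apply: (@le_trans _ _ (x m + y (maxn m n))%R).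
      by apply: HE; apply: dec_le => //; rewrite leq_maxl.
    rewrite (addrC (x m)) (addrC (x m)); apply: HE.
    by apply: dec_le => //; rewrite leq_maxr.
  have := HE _ _ (- x m)%R H.
  by rewrite (addrC (x m)) addrK.
have H2 : (z - t <= s)%R.
  apply: Hs2 => m.
  have := HE _ _ (x m - t)%R (H1 m).
  rewrite addrA subrK; rewrite [(t + _)%R]addrC subrK; done.
have := HE _ _ t H2.
by rewrite subrK.
Qed.

End Aux.

Section Main.
Variables (d : Order.disp_t) (V : latticeType d) (L : V -> Prop)
  (E : porderZmodType) (phi : V -> E).

Lemma PiL_sub : sublattice L -> forall a, L a -> PiL L phi a.
Proof.
move=> _ a La; exists (fun _ => a); split; last exact: inf_const.
split=> //; split=> //; split; exists a || exists (phi a); exact: inf_const.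
Qed.

Lemma PiL_sublattice : valuation_system L phi -> sublattice (PiL L phi).
Proof.
move=> [[SDi SDs] [SL [HE [[RC _] [Vm Vv]]]]] x y.
move=> [a [[La [Da [_ [sa Hsa]]]] Hx]] [c [[Lc [Dc [_ [sc Hsc]]]] Hy]].
have Le : forall n, L (a n `&` c n) by move=> n; case: (SL _ _ (La n) (Lc n)).
have Lf : forall n, L (a n `|` c n) by move=> n; case: (SL _ _ (La n) (Lc n)).
have De : decreasing (fun n => a n `&` c n) by move=> n; apply: leI2.
have Df : decreasing (fun n => a n `|` c n) by move=> n; apply: leU2.
have Dpa : decreasing (fun n => phi (a n)) by move=> n; apply: Vm.
have Dpc : decreasing (fun n => phi (c n)) by move=> n; apply: Vm.
have Dpe : decreasing (fun n => phi (a n `&` c n)) by move=> n; apply: Vm.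
have Dpf : decreasing (fun n => phi (a n `|` c n)) by move=> n; apply: Vm.
have Hsum := inf_add HE Dpa Dpc Hsa Hsc.
have Hsum' : exists s, is_inf (fun n => phi (a n `&` c n) + phi (a n `|` c n))%R s.
  exists (sa + sc)%R; apply: inf_ext Hsum => n; by rewrite Vv.
have [[se Hse] [sf Hsf]] := RC _ _ Dpe Dpf Hsum'.
case: Hx => [Hx1 Hx2]; case: Hy => [Hy1 Hy2].
have HinfI : is_inf (fun n => a n `&` c n) (x `&` y).
  split=> [n|z Hz]; first by apply: leI2.
  rewrite lexI; apply/andP; split.
    by apply: Hx2 => n; move: (Hz n); rewrite lexI => /andP[].
  by apply: Hy2 => n; move: (Hz n); rewrite lexI => /andP[].
split.
- exists (fun n => a n `&` c n); split => //.
  by split=> //; split=> //; split; [exists (x `&` y)|exists se].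
- have Hinf : is_inf (fun n => a n `|` c n) (x `|` y).
    split=> [n|z Hz]; first by apply: leU2.
    have H1 : forall m, z <= c m `|` x.
      move=> m; have [_ H] := SDi (c m) a x (conj Hx1 Hx2).
      apply: H => n; apply: (le_trans (Hz (maxn n m))).
      rewrite joinC; apply: leU2; apply: dec_le => //; by rewrite ?leq_maxl ?leq_maxr.
    have [_ H] := SDi x c y (conj Hy1 Hy2).
    by apply: H => m; rewrite joinC.
  exists (fun n => a n `|` c n); split => //.
  by split=> //; split=> //; split; [exists (x `|` y)|exists sf].
Qed.

Lemma Piphi_on_L (Piphi : V -> E) :
  (forall a : nat -> V, phi_convergent L phi a ->
    forall x, is_inf a x -> is_inf (fun n => phi (a n)) (Piphi x)) ->
  forall a, L a -> Piphi a = phi a.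
Proof.
move=> H a La; apply: (@inf_unique _ _ (fun _ => phi a)); last exact: inf_const.
apply: (H (fun _ => a)); last exact: inf_const.
split=> //; split=> //; split; [exists a|exists (phi a)]; exact: inf_const.
Qed.

Lemma PiL_complete (Piphi : V -> E) : valuation_system L phi ->
  valuation (PiL L phi) Piphi ->
  (forall a : nat -> V, phi_convergent L phi a ->
    forall x, is_inf a x -> is_inf (fun n => phi (a n)) (Piphi x)) ->
  Pi_complete (PiL L phi) Piphi.
Proof.
move=> [_ [SL [HE [_ [Vm Vv]]]]] [Pm _] Hinf xs [Pxs [Dxs [_ [s Hs]]]] x Hx.
have HPL := Piphi_on_L Hinf.
have [A HA] : exists A : nat -> nat -> V,
    forall k, phi_convergent L phi (A k) /\ is_inf (A k) (xs k).
  exists (fun k => proj1_sig (constructive_indefinite_description _ (Pxs k))).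
  move=> k; exact: (proj2_sig (constructive_indefinite_description _ (Pxs k))).
pose g := fun n => fix g m := match m with 0 => A 0 n | m'.+1 => g m' `&` A m'.+1 n end.
pose b := fun n => g n n.
have Lg : forall n m, L (g n m).
  move=> n; elim=> [|m IH] /=; first by case: (HA 0) => [[]].
  by case: (HA m.+1) => [[LA _] _]; case: (SL _ _ IH (LA n)).
have gA : forall n m k, (k <= m)%N -> g n m <= A k n.
  move=> n; elim=> [|m IH] k /=; first by rewrite leqn0 => /eqP ->.
  rewrite leq_eqVlt => /orP[/eqP ->|]; first exact: leIr.
  by rewrite ltnS => /IH; apply: le_trans; apply: leIl.
have gdec : forall n m, g n.+1 m <= g n m.
  move=> n; elim=> [|m IH] /=; first by case: (HA 0) => [[_ [DA _]] _]; apply: DA.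
  by apply: leI2 => //; case: (HA m.+1) => [[_ [DA _]] _]; apply: DA.
have Db : decreasing b.
  move=> n; rewrite /b; apply: le_trans (gdec n n); exact: leIl.
have xsg : forall n m, (m <= n)%N -> xs n <= g n m.
  move=> n; elim=> [|m IH] /= Hm.
    apply: (le_trans (dec_le Dxs (leq0n n))).
    by case: (HA 0) => [_ [H _]]; apply: H.
  rewrite lexI IH ?(ltnW Hm) //=.
  apply: (le_trans (dec_le Dxs Hm)).
  by case: (HA m.+1) => [_ [H _]]; apply: H.
case: Hx => [Hx1 Hx2].
have Hbx : is_inf b x.
  split=> [n|z Hz].
    apply: le_trans (Hx1 n) _; exact: xsg.
  apply: Hx2 => k; case: (HA k) => [_ [_ H]]; apply: H => n.
  apply: (le_trans (Hz (maxn n k))); rewrite /b.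
  by apply: le_trans (gA _ _ k (leq_maxr n k)) _; case: (HA k) => [[_ [DA _]] _];
    apply: dec_le => //; rewrite leq_maxl.
have Lb : forall n, L (b n) by move=> n; apply: Lg.
have Hbs : is_inf (fun n => phi (b n)) s.
  case: Hs => [Hs1 Hs2]; split=> [n|y Hy].
    apply: (le_trans (Hs1 n)); rewrite -HPL //.
    apply: Pm => //; first exact: PiL_sub.
    by apply: xsg.
  apply: Hs2 => k; case: (HA k) => [[LA [DA _]] HAk].
  have := Hinf _ (proj1 (HA k)) _ HAk; case=> [_ H]; apply: H => n.
  apply: (le_trans (Hy (maxn n k))).
  apply: (@le_trans _ _ (phi (A k (maxn n k)))).
    by apply: Vm => //; apply: gA; rewrite leq_maxr.
  by apply: Vm => //; apply: dec_le => //; rewrite leq_maxl.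
have Hbc : phi_convergent L phi b.
  split; first exact: Lb. split; first exact: Db. split; [by exists x|exact: (ex_intro _ s Hbs)].
split; first by exists b.
have := Hinf _ Hbc _ Hbx => Hb2.
by rewrite -(inf_unique Hbs Hb2).
Qed.

End Main.

Theorem mainTheorem4 (d : Order.disp_t) (V : latticeType d) (L : V -> Prop)
  (E : porderZmodType) (phi : V -> E) :
  valuation_system L phi ->
  (Pi_extendible L phi <->
   exists (C : V -> Prop) (psi : V -> E),
     sublattice C /\ valuation C psi /\ Pi_complete C psi /\
     extends L phi C psi).
Proof.
move=> HVS; have HVS' := HVS.
case: HVS' => [_ [SL [HE [RC [Vm Vv]]]]].
split.
- move=> [Piphi [HV Hinf]].
  exists (PiL L phi), Piphi; split; first exact: PiL_sublattice.
  split => //; split; first exact: PiL_complete.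
  split; first exact: PiL_sub.
  exact: Piphi_on_L.
- move=> [C [psi [SC [[Cm Cv] [PC [LC Lpsi]]]]]].
  have key : forall a, phi_convergent L phi a -> forall x, is_inf a x ->
      C x /\ is_inf (fun n => phi (a n)) (psi x).
    move=> a [La [Da [ex [s Hs]]]] x Hx.
    have Hc : phi_convergent C psi a.
      split; first by move=> n; apply: LC.
      split=> //; split=> //; exists s; apply: inf_ext Hs => n; by rewrite Lpsi.
    have [Cx H] := PC _ Hc _ Hx.
    split=> //; apply: inf_ext H => n; by rewrite Lpsi.
  exists psi; split; last by move=> a Ha x Hx; case: (key _ Ha _ Hx).
  have PC' : forall x, PiL L phi x -> C x.
    by move=> x [a [Ha Hx]]; case: (key _ Ha _ Hx).
  split=> a b Ha Hb; [apply: Cm|apply: Cv]; exact: PC'.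
Qed.
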